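(* Let $p$ be a prime with $p\equiv 1\pmod 3$. Then $$\sum_{\substack{k=0\\ k\neq (p-1)/3}}^{(p-1)/2}\frac{\binom{2k}{k}}{3k+1}\equiv 0\pmod p.$$
   Context: For $0\le k\le (p-1)/2$ with $k\neq (p-1)/3$, the integer $3k+1$ is not divisible by $p$, so each summand is a rational number whose denominator is prime to $p$; the congruence is understood in the ring of rationals with denominators prime to $p$ (equivalently in $\mathbb{Z}_p$). *)

(* Defs.v *)
From HB Require Import structures.
From mathcomp Require Import all_boot all_order all_algebra.
Set Implicit Arguments. Unset Strict Implicit. Unset Printing Implicit Defensive.
Import Order.TTheory GRing.Theory Num.Theory.
Local Open Scope ring_scope.

(* A rational x is congruent to 0 modulo p in the ring Z_(p) of rationals
   with denominator prime to p: x = a / b with a, b integers, p not dividing b,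
   and p dividing a. *)
Definition rat_cong0_mod (p : nat) (x : rat) : Prop :=
  exists (a b : int), ~~ (p%:Z %| b)%Z /\ (p%:Z %| a)%Z /\ x = a%:~R / b%:~R.

(* Main.v *)
Require Import Defs.
From HB Require Import structures.
From mathcomp Require Import all_boot all_order all_algebra.
From mathcomp Require Import ring zify.
Import Order.TTheory GRing.Theory Num.Theory.

Local Open Scope ring_scope.

Section LamPi.
Variable R : fieldType.

Definition Lam (E : {poly R}) : R := \sum_(i < size E) E`_i / i.+1%:R.
Definition Pi (F : {poly R}) : R := \sum_(i < size F) F`_i * (i%:R == 0 :> R)%:R.

Lemma sum_wide (f : nat -> R) s n : (s <= n)%N -> (forall i, (s <= i)%N -> f i = 0) ->
  \sum_(i < s) f i = \sum_(i < n) f i.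
Proof.
move=> sn f0; rewrite (big_ord_widen n _ sn) big_mkcond; apply: eq_bigr => i _.
by case: ifP => // /negbT; rewrite -leqNgt => /f0 ->.
Qed.

Lemma Lam_wide n (E : {poly R}) : (size E <= n)%N -> Lam E = \sum_(i < n) E`_i / i.+1%:R.
Proof. by move=> h; apply: (sum_wide (fun i => E`_i / i.+1%:R)) => // i hi; rewrite nth_default ?mul0r. Qed.

Lemma Pi_wide n (E : {poly R}) : (size E <= n)%N -> Pi E = \sum_(i < n) E`_i * (i%:R == 0 :> R)%:R.
Proof. by move=> h; apply: (sum_wide (fun i => E`_i * (i%:R == 0 :> R)%:R)) => // i hi; rewrite nth_default ?mul0r. Qed.

Lemma LamD (E1 E2 : {poly R}) : Lam (E1 + E2) = Lam E1 + Lam E2.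
Proof.
pose n := maxn (size E1) (size E2).
rewrite (Lam_wide n (E1 + E2)) ?(leq_trans (size_polyD _ _)) //.
rewrite (Lam_wide n E1) ?leq_maxl // (Lam_wide n E2) ?leq_maxr //.
by rewrite -big_split; apply: eq_bigr => i _; rewrite coefD mulrDl.
Qed.

Lemma PiD (E1 E2 : {poly R}) : Pi (E1 + E2) = Pi E1 + Pi E2.
Proof.
pose n := maxn (size E1) (size E2).
rewrite (Pi_wide n (E1 + E2)) ?(leq_trans (size_polyD _ _)) //.
rewrite (Pi_wide n E1) ?leq_maxl // (Pi_wide n E2) ?leq_maxr //.
by rewrite -big_split; apply: eq_bigr => i _; rewrite coefD mulrDl.
Qed.

Lemma Lam0 : Lam 0 = 0. Proof. by rewrite /Lam size_poly0 big_ord0. Qed.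
Lemma Pi0 : Pi 0 = 0. Proof. by rewrite /Pi size_poly0 big_ord0. Qed.

Lemma LamZ c (E : {poly R}) : Lam (c *: E) = c * Lam E.
Proof.
rewrite (Lam_wide (size E) (c *: E)) ?size_scale_leq // /Lam mulr_sumr.
by apply: eq_bigr => i _; rewrite coefZ mulrA.
Qed.

Lemma PiZ c (E : {poly R}) : Pi (c *: E) = c * Pi E.
Proof.
rewrite (Pi_wide (size E) (c *: E)) ?size_scale_leq // /Pi mulr_sumr.
by apply: eq_bigr => i _; rewrite coefZ mulrA.
Qed.

Lemma LamN (E : {poly R}) : Lam (- E) = - Lam E.
Proof. by rewrite -scaleN1r LamZ mulN1r. Qed.
Lemma PiN (E : {poly R}) : Pi (- E) = - Pi E.
Proof. by rewrite -scaleN1r PiZ mulN1r. Qed.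

Lemma LamB (E1 E2 : {poly R}) : Lam (E1 - E2) = Lam E1 - Lam E2.
Proof. by rewrite LamD LamN. Qed.
Lemma PiB (E1 E2 : {poly R}) : Pi (E1 - E2) = Pi E1 - Pi E2.
Proof. by rewrite PiD PiN. Qed.

Lemma Lam_sum I (r : seq I) (P : pred I) (F : I -> {poly R}) :
  Lam (\sum_(i <- r | P i) F i) = \sum_(i <- r | P i) Lam (F i).
Proof. exact: (big_morph _ LamD Lam0). Qed.
Lemma Pi_sum I (r : seq I) (P : pred I) (F : I -> {poly R}) :
  Pi (\sum_(i <- r | P i) F i) = \sum_(i <- r | P i) Pi (F i).
Proof. exact: (big_morph _ PiD Pi0). Qed.

Lemma LamXn e : Lam 'X^e = (e.+1%:R)^-1.
Proof.
rewrite /Lam size_polyXn big_ord_recr /= big1 ?add0r ?coefXn ?eqxx ?mul1r //.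
by move=> i _; rewrite coefXn /= (ltn_eqF (ltn_ord i)) mul0r.
Qed.

Lemma PiXn e : Pi 'X^e = (e%:R == 0 :> R)%:R.
Proof.
rewrite /Pi size_polyXn big_ord_recr /= big1 ?add0r ?coefXn ?eqxx ?mul1r //.
by move=> i _; rewrite coefXn /= (ltn_eqF (ltn_ord i)) mul0r.
Qed.

Lemma key1 (F : {poly R}) : F.[1] = Lam F^`() + Pi F.
Proof.
set s := size F.
rewrite horner_coef (Lam_wide s F^`()); last first.
  by rewrite (leq_trans (size_poly _ _)) // leq_pred.
rewrite (Pi_wide s.+1 F) // (@sum_wide (fun i => F`_i * 1 ^+ i) s s.+1 (leqnSn s)); last first.
  by move=> i hi; rewrite nth_default ?mul0r.
rewrite big_ord_recl [in X in _ = _ + X]big_ord_recl /= eqxx mulr1.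
rewrite addrCA -big_split /=; congr (_ + _); apply: eq_bigr => i _.
rewrite coef_deriv expr1n mulr1 /bump /=.
have [->|nz] := eqVneq (i.+1%:R : R) 0; first by rewrite invr0 !mulr0 mulr1 add0r.
by rewrite add1n -[F`_i.+1 *+ _]mulr_natr mulfK // mulr0 addr0.
Qed.

Lemma Lam_shift l (E : {poly R}) : (l%:R : R) = 0 -> Lam ('X^l * E) = Lam E.
Proof.
move=> l0.
rewrite (Lam_wide (l + size E) ('X^l * E)); last first.
  by rewrite (leq_trans (size_polyMleq _ _)) // size_polyXn addSn.
rewrite big_split_ord /= big1 ?add0r; last first.
  by move=> i _; rewrite coefXnM ltn_ord mul0r.
apply: eq_bigr => i _; rewrite coefXnM ltnNge leq_addr /= addKn.
by rewrite -addnS natrD l0 add0r.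
Qed.

Lemma Pi_shift l (E : {poly R}) : (l%:R : R) = 0 -> Pi ('X^l * E) = Pi E.
Proof.
move=> l0.
rewrite (Pi_wide (l + size E) ('X^l * E)); last first.
  by rewrite (leq_trans (size_polyMleq _ _)) // size_polyXn addSn.
rewrite big_split_ord /= big1 ?add0r; last first.
  by move=> i _; rewrite coefXnM ltn_ord mul0r.
apply: eq_bigr => i _; rewrite coefXnM ltnNge leq_addr /= addKn.
by rewrite natrD l0 add0r.
Qed.

End LamPi.
Arguments Lam {R}.
Arguments Pi {R}.
Arguments sum_wide {R}.
Arguments Lam_wide {R}.
Arguments Pi_wide {R}.
Arguments LamD {R}.
Arguments PiD {R}.
Arguments Lam0 {R}.
Arguments Pi0 {R}.
Arguments LamZ {R}.
Arguments PiZ {R}.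
Arguments LamN {R}.
Arguments PiN {R}.
Arguments LamB {R}.
Arguments PiB {R}.
Arguments Lam_sum {R}.
Arguments Pi_sum {R}.
Arguments LamXn {R}.
Arguments PiXn {R}.
Arguments key1 {R}.
Arguments Lam_shift {R}.
Arguments Pi_shift {R}.


Section Core.
Variables (R : fieldType) (p h : nat).
Hypothesis pR : p \in [pchar R].
Hypothesis hp : p = (6 * h).+1.

Local Notation N := (3 * h)%N.
Local Notation m := (2 * h)%N.

Lemma p_prime : prime p. Proof. exact: pcharf_prime pR. Qed.
Lemma h_gt0 : (0 < h)%N.
Proof. by have := p_prime; rewrite hp; case: h. Qed.
Lemma natp0 : (p%:R : R) = 0.
Proof. by apply/eqP; rewrite -(dvdn_pcharf pR). Qed.
Lemma nat_eq0 n : ((n%:R : R) == 0) = (p %| n)%N.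
Proof. by rewrite (dvdn_pcharf pR). Qed.

Lemma small_neq0 n : (0 < n < p)%N -> (n%:R : R) != 0.
Proof.
move=> /andP[n0 np]; rewrite nat_eq0; apply/negP => /(dvdn_leq n0).
by rewrite leqNgt np.
Qed.

Lemma three_neq0 : (3%:R : R) != 0.
Proof. by apply: small_neq0; have := h_gt0; rewrite hp; lia. Qed.
Lemma two_neq0 : (2%:R : R) != 0.
Proof. by apply: small_neq0; have := h_gt0; rewrite hp; lia. Qed.

Lemma coprime_p3 : coprime p 3.
Proof.
rewrite prime_coprime ?p_prime //; apply/negP => /(dvdn_leq) => /(_ isT).
by have := h_gt0; rewrite hp; lia.
Qed.

Lemma denom_neq0 k : (k <= N)%N -> k != m -> ((3 * k).+1%:R : R) != 0.
Proof.
move=> kN km; rewrite nat_eq0; apply/negP => /dvdnP [q hq].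
have h0 := h_gt0.
move/eqP: km; rewrite hp in hq.
case: q hq => [|[|q]] hq; nia.
Qed.

Definition c k : R := ('C(2 * k, k))%:R.

Lemma h6 : (h%:R : R) * 6%:R = -1.
Proof.
have := natp0; rewrite hp -addn1 natrD natrM => /eqP.
by rewrite addr_eq0 mulrC => /eqP.
Qed.

Lemma c_binom k : (k <= N)%N -> c k = ('C(N, k))%:R * (-4%:R) ^+ k.
Proof.
elim: k => [|k IH] kN; first by rewrite /c !bin0 expr0 mulr1.
have kN' : (k <= N)%N by apply: ltnW.
have nz : (k.+1%:R : R) != 0 by apply: small_neq0; rewrite hp; lia.
apply: (mulfI nz).
have e1 : (k.+1 * 'C(2 * k.+1, k.+1) = 2 * (2 * k).+1 * 'C(2 * k, k))%N.
  have A := mul_bin_diag (2 * k).+1 k.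
  have B := mul_bin_diag (2 * k).+2 k.
  have C : 'C((2 * k).+1, k) = 'C((2 * k).+1, k.+1).
    rewrite -(@bin_sub (2 * k).+1 k); last lia.
    by have -> : ((2 * k).+1 - k = k.+1)%N by lia.
  rewrite /= C in A B.
  have -> : (2 * k.+1 = (2 * k).+2)%N by lia.
  nia.
have e2 := mul_bin_left N k.
rewrite /c -natrM e1 mulrA -natrM e2 exprS.
rewrite !natrM -/(c k) IH // natrB //.
apply/eqP; rewrite -subr_eq0; apply/eqP.
transitivity (('C(N,k)%:R * (-4%:R)^+k * 2%:R) * ((h%:R:R) * 6%:R + 1)); first ring.
by rewrite h6 addNr mulr0.
Qed.

Definition g k : R := c k / ((3 * k).+1)%:R.
Definition G : {poly R} := \sum_(k < N.+1 | (k : nat) != m) g k *: 'X^((3 * k).+1).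
Definition w : {poly R} := 1 - 4%:R * 'X^3.

Lemma m_lt : (m < N.+1)%N. Proof. by have := h_gt0; lia. Qed.

Lemma wN_expand : w ^+ N = \sum_(k < N.+1) c k *: 'X^(3 * k).
Proof.
rewrite /w exprDn; apply: eq_bigr => i _; rewrite expr1n mul1r.
rewrite c_binom; last by rewrite -ltnS.
rewrite -mul_polyC rmorphM rmorphXn /= polyCN !polyC_natr exprM -mulr_natl -mulNr exprMn.
ring.
Qed.
Lemma G_deriv : G^`() = \sum_(k < N.+1 | (k : nat) != m) c k *: 'X^(3 * k).
Proof.
rewrite /G (big_morph _ (@derivD R) (@deriv0 R)); apply: eq_bigr => k km; rewrite derivZ derivXn /= -scaler_nat scalerA.
have kN : (k <= N)%N by rewrite -ltnS.
by rewrite /g divfK // denom_neq0.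
Qed.

Lemma wN_split : w ^+ N = G^`() + c m *: 'X^(3 * m).
Proof.
rewrite wN_expand G_deriv (bigD1 (Ordinal m_lt)) //= addrC; congr (_ + _).
Qed.

Lemma Pi_G : Pi G = 0.
Proof.
rewrite /G Pi_sum big1 // => k km; rewrite PiZ PiXn.
have kN : (k <= N)%N by rewrite -ltnS.
by rewrite (negbTE (@denom_neq0 k kN km)) mulr0.
Qed.

Lemma G1 : G.[1] = \sum_(k < N.+1 | (k : nat) != m) g k.
Proof.
rewrite /G horner_sum; apply: eq_bigr => k _.
by rewrite hornerZ hornerXn expr1n mulr1.
Qed.

Lemma Lam_w : Lam (w ^+ N) = G.[1].
Proof.
rewrite wN_split LamD LamZ LamXn (key1 G) Pi_G addr0.
by rewrite mulnA -hp natp0 invr0 mulr0 addr0.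
Qed.

Definition Q : {poly R} := 1 - 'X^3.
Definition S : {poly R} := 3%:R * 'X^2.
Definition b k := (2 * p - (3 * k).+1)%N.
Definition Kh : {poly R} :=
  \sum_(k < N.+1 | (k : nat) != m) g k *: (Q ^+ (3 * k).+1 * S ^+ b k).
Definition DQ : {poly R} := Q^`() * S - Q * S^`().

Lemma Kh1 : Kh.[1] = 0.
Proof.
rewrite /Kh horner_sum big1 // => k _.
rewrite hornerZ hornerM horner_exp /Q !hornerE expr1n subrr expr0n /=.
by rewrite mulr0 mul0r.
Qed.

Lemma DQE : DQ = - (3%:R * 'X * ('X^3 + 2%:R)).
Proof. rewrite /DQ /Q /S !derivE /=; ring. Qed.

Lemma b_ge1 k : (k <= N)%N -> (1 <= b k)%N.
Proof. by rewrite /b hp; lia. Qed.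

Lemma bR k : (k <= N)%N -> ((b k)%:R : {poly R}) = - ((3 * k).+1)%:R.
Proof.
move=> kN; apply/eqP; rewrite -subr_eq0 opprK -natrD.
have -> : (b k + (3 * k).+1 = 2 * p)%N by rewrite /b hp; lia.
by rewrite natrM -[p%:R]polyC_natr natp0 polyC0 mulr0.
Qed.

Lemma Kh_deriv : Kh^`() =
  DQ * \sum_(k < N.+1 | (k : nat) != m) c k *: (Q ^+ (3 * k) * S ^+ (b k).-1).
Proof.
rewrite /Kh (big_morph _ (@derivD R) (@deriv0 R)) mulr_sumr; apply: eq_bigr => k km.
have kN : (k <= N)%N by rewrite -ltnS.
rewrite derivZ derivM !deriv_exp /= -[_ *+ (3 * k).+1]mulr_natr -[_ *+ b k]mulr_natr (bR k kN).
have -> : S ^+ b k = S * S ^+ (b k).-1 by rewrite -exprS prednK // b_ge1.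
rewrite exprS /DQ -!mul_polyC.
have -> : (c k)%:P = (g k)%:P * ((3 * k).+1)%:R.
  by rewrite -polyC_natr -rmorphM /g divfK // denom_neq0.
ring.
Qed.

Lemma bin_QS : \sum_(k < N.+1) c k *: (Q ^+ (3 * k) * S ^+ (b k).-1)
  = S ^+ N * (S ^+ 3 - 4%:R * Q ^+ 3) ^+ N.
Proof.
rewrite exprDn mulr_sumr; apply: eq_bigr => i _.
have iN : (i <= N)%N by rewrite -ltnS.
rewrite c_binom // -mul_polyC rmorphM rmorphXn /= polyCN !polyC_natr.
have -> : ((b i).-1 = N + 3 * (N - i))%N by rewrite /b hp; lia.
have e : (- (4%:R * Q ^+ 3)) ^+ i = (-4%:R) ^+ i * (Q ^+ 3) ^+ i.
  by rewrite -mulNr exprMn.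
rewrite e exprD [S ^+ (3 * (N - i))]exprM [Q ^+ (3 * i)]exprM.
rewrite [in RHS]mulrnAr -[in RHS]mulr_natr; ring.
Qed.

Lemma curve : S ^+ 3 - 4%:R * Q ^+ 3 = - (w * ('X^3 + 2%:R) ^+ 2).
Proof. rewrite /S /Q /w; ring. Qed.

Lemma frobP (x y : {poly R}) : (x + y) ^+ p = x ^+ p + y ^+ p.
Proof.
have pR' : p \in [pchar {poly R}] by rewrite pchar_poly.
by rewrite -!(pFrobenius_autE pR') pFrobenius_autD_comm //; apply: mulrC.
Qed.

Lemma T_p : ('X^3 + 2%:R : {poly R}) ^+ p = 'X^(3 * p) + 2%:R.
Proof.
rewrite frobP exprM; congr (_ + _).
have pR' : p \in [pchar {poly R}] by rewrite pchar_poly.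
by rewrite -(pFrobenius_autE pR') pFrobenius_aut_nat.
Qed.

Lemma main_poly : DQ * (S ^+ N * (S ^+ 3 - 4%:R * Q ^+ 3) ^+ N) =
  ((-3%:R) ^+ N.+1)%:P * ('X^(4 * p) * w ^+ N + 2%:R%:P * ('X^p * w ^+ N)).
Proof.
have -> : ('X^(4 * p) * w ^+ N + 2%:R%:P * ('X^p * w ^+ N) : {poly R}) =
   'X^p * ('X^3 + 2%:R) ^+ p * w ^+ N.
  by rewrite T_p polyC_natr (_ : 4 * p = p + 3 * p)%N ?exprD; [ring | lia].
have pe : p = (2 * N).+1 by rewrite hp; lia.
have eX : forall y : {poly R}, y ^+ p = y * (y ^+ 2) ^+ N.
  by move=> y; rewrite pe exprS exprM.
rewrite DQE curve /S !eX rmorphXn /= polyCN polyC_natr.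
have e3 : (- 3%:R : {poly R}) ^+ N.+1 = - 3%:R * ((-1) ^+ N * 3%:R ^+ N).
  by rewrite exprS -exprMn mulN1r.
rewrite e3 -[- (w * _)]mulN1r !exprMn; ring.
Qed.

Lemma harm_shift : \sum_(i < p) (i.+1%:R : R)^-1 = \sum_(i < p) (i%:R : R)^-1.
Proof.
have [p' pe] : exists p', p = p'.+1 by exists (6 * h); rewrite hp.
rewrite pe big_ord_recr big_ord_recl /= -pe natp0 invr0 addr0 add0r.
by apply: eq_bigr => i _.
Qed.

Lemma harm : \sum_(i < p) (i%:R : R)^-1 = 0.
Proof.
have rv : \sum_(i < p) (i%:R : R)^-1 = - \sum_(i < p) (i.+1%:R : R)^-1.
  rewrite (reindex_inj rev_ord_inj) /= -sumrN; apply: eq_bigr => i _.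
  by rewrite natrB ?ltn_ord // natp0 sub0r invrN.
rewrite harm_shift in rv.
have : (\sum_(i < p) (i%:R : R)^-1) * 2%:R = 0.
  by rewrite mulr_natr mulr2n {1}rv addNr.
by move/eqP; rewrite mulf_eq0 (negbTE two_neq0) orbF => /eqP.
Qed.

Lemma Q_neq0 : Q != 0.
Proof.
apply/eqP => Q0; have := congr1 (horner^~ 0) Q0.
by rewrite /Q !hornerE expr0n /= subr0 => /eqP; rewrite oner_eq0.
Qed.

Lemma Q_p : Q ^+ p = 1 - 'X^(3 * p).
Proof.
have pR' : p \in [pchar {poly R}] by rewrite pchar_poly.
by rewrite /Q -(pFrobenius_autE pR') pFrobenius_autB_comm ?pFrobenius_aut1 ?pFrobenius_autE ?exprM //; apply: mulrC.
Qed.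

Lemma geomQ : Q ^+ p.-1 = \sum_(i < p) 'X^(3 * i).
Proof.
apply: (mulfI Q_neq0); rewrite -exprS prednK ?prime_gt0 ?p_prime // Q_p.
have := subrXX 1 ('X^3 : {poly R}) p; rewrite expr1n -exprM => ->.
congr (_ * _); apply: eq_bigr => i _; by rewrite expr1n mul1r exprM.
Qed.

Lemma LamC a (E : {poly R}) : Lam (a%:P * E) = a * Lam E.
Proof. by rewrite mul_polyC LamZ. Qed.

Lemma rest0 : Lam (DQ * (Q ^+ (3 * m) * S ^+ (b m).-1)) = 0.
Proof.
have e1 : (3 * m = p.-1)%N by rewrite hp; lia.
have e2 : ((b m).-1 = p.-1)%N by rewrite /b hp; lia.
have e3 : (p.-1 = 6 * h)%N by rewrite hp.
rewrite e1 e2 geomQ DQE /S e3.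
set a : R := - 3%:R ^+ (6 * h).+1.
rewrite (_ : _ * _ = \sum_(i < p) a%:P *
   ('X^(12 * h + 3 * i + 4) + (2%:R)%:P * 'X^(12 * h + 3 * i + 1))); last first.
  rewrite mulr_suml mulr_sumr; apply: eq_bigr => i _.
  have eXp : forall e, ('X^(12 * h + 3 * i + e) : {poly R}) =
      ('X^2) ^+ (6 * h) * 'X^(3 * i) * 'X^e.
    by move=> e; rewrite -exprM -!exprD; congr ('X^_); lia.
  rewrite /a rmorphN rmorphXn /= !polyC_natr !eXp exprMn (exprS (3%:R : {poly R})); ring.
rewrite Lam_sum.
have n2p : forall x, ((2 * p + x)%:R : R) = x%:R.
  by move=> x; rewrite natrD natrM natp0 mulr0 add0r.
have E1 : forall i, ((12 * h + 3 * i + 4).+1 = 2 * p + 3 * i.+1)%N.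
  by move=> i; rewrite hp; lia.
have E2 : forall i, ((12 * h + 3 * i + 1).+1 = 2 * p + 3 * i)%N.
  by move=> i; rewrite hp; lia.
under eq_bigr => i _ do rewrite LamC LamD LamC !LamXn E1 E2 !n2p !natrM !invfM.
rewrite -mulr_sumr big_split /= -!mulr_sumr.
by rewrite harm_shift harm !mulr0 addr0 mulr0.
Qed.


Lemma PiC a (E : {poly R}) : Pi (a%:P * E) = a * Pi E.
Proof. by rewrite mul_polyC PiZ. Qed.

Lemma ndvd_small k i : (k < m)%N -> (i <= (3 * k).+1)%N -> ~~ (p %| 3 * i + 2 * b k)%N.
Proof.
move=> km ik; apply/negP => /dvdnP [q hq]; move: hq; rewrite /b hp => hq.
case: q hq => [|[|[|[|[|q]]]]] hq; nia.
Qed.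

Lemma Pi_term k : (k <= N)%N -> (k : nat) != m -> Pi (Q ^+ (3 * k).+1 * S ^+ b k) = 0.
Proof.
move=> kN km; case: (ltngtP k m) => [klt|kgt|keq]; last by rewrite keq eqxx in km.
- rewrite /Q exprBn /S exprMn mulr_suml Pi_sum big1 // => i _.
  rewrite (_ : _ * _ = ((-1) ^+ i * ('C((3 * k).+1, i))%:R * 3%:R ^+ b k)%:P
     * 'X^(3 * i + 2 * b k)); last first.
    rewrite !rmorphM !rmorphXn /= polyCN !polyC_natr exprD !exprM expr1n.
    rewrite -[_ *+ 'C(_, _)]mulr_natr; ring.
  rewrite PiC PiXn nat_eq0 (negbTE (@ndvd_small k i klt _)) ?mulr0 //.
  by rewrite -ltnS.
- have ea : ((3 * k).+1 = p + 3 * (k - m))%N by rewrite hp; lia.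
  rewrite ea exprD Q_p -mulrA mulrBl mul1r PiB.
  by rewrite Pi_shift ?subrr // natrM natp0 mulr0.
Qed.

Lemma PiKh : Pi Kh = 0.
Proof.
rewrite /Kh Pi_sum big1 // => k km; rewrite PiZ Pi_term ?mulr0 //.
by rewrite -ltnS.
Qed.

Lemma G1_zero : G.[1] = 0.
Proof.
have := key1 Kh; rewrite Kh1 PiKh addr0 Kh_deriv.
have -> : \sum_(k < N.+1 | (k : nat) != m) c k *: (Q ^+ (3 * k) * S ^+ (b k).-1)
   = S ^+ N * (S ^+ 3 - 4%:R * Q ^+ 3) ^+ N - c m *: (Q ^+ (3 * m) * S ^+ (b m).-1).
  rewrite -bin_QS [in RHS](bigD1 (Ordinal m_lt)) //= addrAC subrr add0r.
  by apply: eq_bigl => k.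
rewrite mulrBr main_poly -scalerAr LamB LamZ rest0 mulr0 subr0 LamC LamD LamC.
rewrite !Lam_shift ?natrM ?natp0 ?mulr0 // Lam_w.
move/eqP; rewrite eq_sym mulf_eq0 expf_eq0 /= oppr_eq0 (negbTE three_neq0) /=.
rewrite -{1}(mul1r G.[1]) -mulrDl mulf_eq0 => /orP [|/eqP //].
by rewrite (_ : 1 + 2%:R = 3%:R :> R) ?(negbTE three_neq0) //; rewrite -natr1 addrC.
Qed.

Lemma final_F : \sum_(k < N.+1 | (k : nat) != m) c k / ((3 * k).+1)%:R = 0.
Proof. by have := G1_zero; rewrite G1. Qed.

End Core.


Theorem theorem1p3 (p : nat) (hp : prime p) (hp3 : (p %% 3 = 1)%N) :
  rat_cong0_mod p
    (\sum_(0 <= k < (p.-1 %/ 2).+1 | k != (p.-1 %/ 3)%N)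
        ('C(2 * k, k))%:R / (3 * k + 1)%:R : rat).
Proof.
have [h ph] : exists h, p = (6 * h).+1.
  exists (p %/ 6)%N; case: (even_prime hp) => [p2|podd]; first by rewrite p2 in hp3.
  have := div.modn2 p; rewrite podd => pm2; lia.
have e2 : (p.-1 %/ 2 = 3 * h)%N by rewrite ph /=; lia.
have e3 : (p.-1 %/ 3 = 2 * h)%N by rewrite ph /=; lia.
rewrite e2 e3 big_mkord.
have h0 : (0 < h)%N by move: hp; rewrite ph; case: (h).
have dnz : forall k : 'I_(3 * h).+1, (k : nat) != (2 * h)%N -> ~~ (p %| 3 * k + 1)%N.
  move=> k km; apply/negP => /dvdnP [q hq]; move/eqP: km; rewrite ph in hq.
  have := ltn_ord k; case: q hq => [|[|q]] hq; nia.
pose b := (\prod_(k < (3 * h).+1 | (k : nat) != (2 * h)%N) (3 * k + 1))%N.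
have dvb : forall k : 'I_(3 * h).+1, (k : nat) != (2 * h)%N -> (3 * k + 1 %| b)%N.
  by move=> k km; rewrite /b (bigD1 k) //= dvdn_mulr.
pose a := (\sum_(k < (3 * h).+1 | (k : nat) != (2 * h)%N) 'C(2 * k, k) * (b %/ (3 * k + 1)))%N.
have bnd : ~~ (p %| b)%N.
  rewrite /b Euclid_dvd_prod //; apply/negP; rewrite big1 // => k km.
  exact/negbTE/dnz.
have b0 : (0 < b)%N by case: (posnP b) => // b0; rewrite b0 dvdn0 in bnd.
exists a%:Z, b%:Z; split; [by rewrite dvdzE | split].
  rewrite dvdzE /= (dvdn_pcharf (pchar_Fp hp)) /a natr_sum.
  rewrite (eq_bigr (fun k : 'I_(3 * h).+1 => b%:R * (c 'F_p k / ((3 * k).+1)%:R))).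
    by rewrite -mulr_sumr (@final_F [the fieldType of 'F_p] p h (pchar_Fp hp) ph) mulr0.
  move=> k km; rewrite natrM natr_div ?dvb // ?unitfE; last first.
    by rewrite -(dvdn_pcharf (pchar_Fp hp)) dnz.
  by rewrite /c addn1 mulrCA mulrA.
rewrite -!pmulrn /a natr_sum mulr_suml; apply: eq_bigr => k km.
rewrite natrM natr_div ?dvb // ?unitfE ?pnatr_eq0 ?addn1 //.
rewrite mulrCA [_ * _ / b%:R]mulrC mulKf // pnatr_eq0 -lt0n //.
Qed.
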